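(* Let $n\geq 3$, and let $G_1$ and $G_2$ be the $n$-vertex triangulations defined as follows. $G_1$ is obtained from a triangulation $H$ with $\lfloor n/3\rfloor+2$ vertices and maximum degree at most six by inserting, into each face of $H$ with exactly $r$ exceptions, a new vertex adjacent to the three vertices of that face, where $r=0,1,2$ according as $n\equiv 2,1,0\pmod 3$. $G_2$ is obtained from a path on $n-2$ vertices by adding two vertices $a,b$, joining each of them to every path vertex, and adding the edge $(a,b)$. Then any sequence of flips transforming $G_1$ into a triangulation isomorphic to $G_2$ has length at least $3n-6-2\lfloor n/3\rfloor-28\geq \frac{7n}{3}-34$.
   Context: A triangulation means a simple combinatorial triangulation: a maximal planar graph without self-loops or multiple edges, together with a fixed rotation system; all faces are triangles. Flipping an edge $(a,b)$: removing $(a,b)$ leaves a unique quadrilateral face bounded by a cycle $(a,a',b,b')$, and the flip replaces $(a,b)$ by $(a',b')$; only flips keeping the triangulation simple are allowed. *)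

(* Defs.v *)
(* Combinatorial triangulations of the sphere on a finite
   vertex type T, represented by their set of oriented faces: a face with
   counterclockwise boundary a -> b -> c is stored as all three rotations
   (a,b,c), (b,c,a), (c,a,b). The triple (a,b,c) is equivalently the dart
   (a,b) together with the third vertex c of the face to its left; for each
   vertex v, the map u |-> w with (v,u,w) in F is the rotation system at v. *)
From HB Require Import structures.
From mathcomp Require Import all_boot all_order all_algebra perm.
Set Implicit Arguments. Unset Strict Implicit. Unset Printing Implicit Defensive.

Section Tri.
Variable T : finType.

Definition rot3 (t : T * T * T) : T * T * T :=
  let: (a, b, c) := t in (b, c, a).

Definition rots (t : T * T * T) : {set T * T * T} :=
  [set t; rot3 t; rot3 (rot3 t)].

Definition adj (F : {set T * T * T}) : rel T :=
  fun x y => [exists z, (x, y, z) \in F].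

Definition deg (F : {set T * T * T}) (v : T) : nat := #|[set u | adj F v u]|.

Definition is_triangulation (F : {set T * T * T}) : Prop :=
  (forall a b c, (a, b, c) \in F -> [&& a != b, b != c & a != c]) /\
  (forall t, t \in F -> rot3 t \in F) /\
  (* each dart lies on exactly one face (hence no multiple edges) *)
  (forall a b c c', (a, b, c) \in F -> (a, b, c') \in F -> c = c') /\
  (* every edge has two sides, with opposite orientations (oriented surface) *)
  (forall a b c, (a, b, c) \in F -> exists d, (b, a, d) \in F) /\
  (* the rotation at every vertex is a single cycle (a manifold, i.e. a
     genuine rotation system) *)
  (forall v u u', adj F v u -> adj F v u' ->
     connect (fun x y => (v, x, y) \in F) u u') /\
  (forall x y, connect (adj F) x y) /\
  (* Euler: V - E + F = 2, where E = #|F|/2 and #faces = #|F|/3 *)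
  #|F| = 6 * (#|T| - 2).

(* one flip of edge (a,b) with adjacent faces (a,b,c) and (b,a,d):
   the quadrilateral is (a,d,b,c) and the new diagonal is (c,d).
   Only flips keeping the triangulation simple are allowed. *)
Definition flip_step (F F' : {set T * T * T}) : Prop :=
  exists a b c d,
    [/\ (a, b, c) \in F, (b, a, d) \in F, c != d, ~~ adj F c d &
        F' = (F :\: (rots (a, b, c) :|: rots (b, a, d)))
               :|: (rots (c, a, d) :|: rots (d, b, c))] /\
    is_triangulation F'.

Fixpoint flip_reach (k : nat) (F F' : {set T * T * T}) : Prop :=
  match k with
  | 0 => F = F'
  | k'.+1 => exists F'', flip_step F F'' /\ flip_reach k' F'' F'
  end.

Definition graph_iso_to (F : {set T * T * T}) (g : rel T) : Prop :=
  exists s : {perm T}, forall x y, adj F (s x) (s y) = g x y.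

End Tri.

(* G2: path 0 - 1 - ... - (n-3) on the first n-2 vertices, plus the two
   vertices a = n-2 and b = n-1 adjacent to everything (including each other) *)
Definition G2adj (n : nat) : rel 'I_n :=
  fun x y => (x != y) &&
    [|| n - 2 <= x, n - 2 <= y, x.+1 == y | y.+1 == x]%N.

(* number of faces of H left without a new vertex *)
Definition nexc (n : nat) : nat :=
  if n %% 3 == 2 then 0 else if n %% 3 == 1 then 1 else 2.

(* G1 built from H (faces FH on 'I_m), an injective relabelling i of the old
   vertices, a set E of excepted faces (all rotations), and the new vertex
   p s inserted into the face s of H. *)
Definition stacked (n m : nat) (FH E : {set 'I_m * 'I_m * 'I_m})
    (i : 'I_m -> 'I_n) (p : 'I_m * 'I_m * 'I_m -> 'I_n) :
    {set 'I_n * 'I_n * 'I_n} :=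
  [set t | [exists s in FH,
     let: (a, b, c) := s in
     if s \in E then t == (i a, i b, i c)
     else t \in rots (i a, i b, p s)]].

Definition stacking_data (n m : nat) (FH E : {set 'I_m * 'I_m * 'I_m})
    (i : 'I_m -> 'I_n) (p : 'I_m * 'I_m * 'I_m -> 'I_n) : Prop :=
  injective i /\
  E \subset FH /\ (forall t, t \in E -> rot3 t \in E) /\
  (* exactly nexc n faces are excepted (each face = 3 rotations) *)
  #|E| = 3 * nexc n /\
  (forall s, s \in FH -> s \notin E -> p (rot3 s) = p s) /\
  (forall s s', s \in FH -> s' \in FH -> s \notin E -> s' \notin E ->
     p s = p s' -> s' \in rots s) /\
  (forall s x, s \in FH -> s \notin E -> p s != i x) /\
  (forall v, (exists x, v = i x) \/ (exists2 s, s \in FH /\ s \notin E & v = p s)).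

(* Main.v *)
Require Import Defs.
From HB Require Import structures.
From mathcomp Require Import all_boot all_order all_algebra perm zify ring lra.
Import Order.TTheory GRing.Theory Num.Theory.
Set Implicit Arguments. Unset Strict Implicit. Unset Printing Implicit Defensive.

Section Gen.
Variable T : finType.

Definition P (F : {set T * T * T}) : {set T * T} :=
  [set xy | adj F xy.1 xy.2].

Lemma flip_adj (F F' : {set T * T * T}) : flip_step F F' ->
  exists a b, forall x y, adj F x y ->
    adj F' x y || ((x == a) && (y == b)) || ((x == b) && (y == a)).
Proof.
case=> [a [b [c [d [[Habc Hbad Hcd Hncd ->] _]]]]].
exists a, b => x y /existsP [z Hz].
case: (boolP ((x,y,z) \in rots (a,b,c) :|: rots (b,a,d))) => HR; last first.
  by apply/orP; left; apply/orP; left; apply/existsP; exists z;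
     rewrite in_setU in_setD HR Hz.
rewrite /rots /= !inE -!orbA in HR; move: HR.
case/or3P=> [/eqP[-> -> _]| /eqP[-> -> _]|]; first by rewrite !eqxx orbT.
  apply/orP; left; apply/orP; left; apply/existsP; exists d.
  by rewrite /rots /= !inE !eqxx !orbT.
case/or4P=> [/eqP[-> -> _]| /eqP[-> -> _]|/eqP[-> -> _]|/eqP[-> -> _]].
- apply/orP; left; apply/orP; left; apply/existsP; exists d.
  by rewrite /rots /= !inE !eqxx !orbT.
- by rewrite !eqxx orbT.
- apply/orP; left; apply/orP; left; apply/existsP; exists c.
  by rewrite /rots /= !inE !eqxx !orbT.
- apply/orP; left; apply/orP; left; apply/existsP; exists c.
  by rewrite /rots /= !inE !eqxx !orbT.
Qed.

Lemma flip_card (Q : {set T * T}) F F' : flip_step F F' ->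
  #|Q :\: P F'| <= #|Q :\: P F| + 2.
Proof.
move=> /flip_adj [a [b H]].
have sub : Q :\: P F' \subset (Q :\: P F) :|: [set (a,b); (b,a)].
  apply/subsetP => [[x y]]; rewrite !inE /= => /andP [nF' HQ].
  case: (boolP (adj F x y)) => h; last by rewrite HQ.
  move: (H x y h); rewrite (negbTE nF') /= => /orP [/andP[/eqP-> /eqP->]|/andP[/eqP-> /eqP->]];
    by rewrite !eqxx ?orbT.
apply: (leq_trans (subset_leq_card sub)).
apply: (leq_trans (leq_card_setU _ _)).
by rewrite leq_add2l cards2; case: (_ != _).
Qed.

Lemma reach_card (Q : {set T * T}) k F G : flip_reach k F G ->
  #|Q :\: P G| <= #|Q :\: P F| + 2 * k.
Proof.
elim: k F => [|k IH] F /=; first by move=> ->; rewrite addn0.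
case=> F'' [hs hr].
apply: (leq_trans (IH _ hr)).
by rewrite mulnS addnA leq_add2r; apply: flip_card.
Qed.

Lemma card_P (F : {set T * T * T}) : (forall a b c c', (a, b, c) \in F -> (a, b, c') \in F -> c = c') ->
  #|P F| = #|F|.
Proof.
move=> Hu.
have -> : P F = (fun t : T * T * T => (t.1.1, t.1.2)) @: F.
  apply/setP => [[x y]]; rewrite inE /= /adj; apply/existsP/imsetP.
    by case=> z h; exists (x,y,z).
  by move=> [[[a b] c] h [ex ey]]; exists c; rewrite ex ey.
have inj : {in F &, injective (fun t : T * T * T => (t.1.1, t.1.2))}.
  move=> [[a b] c] [[a' b'] c'] h h' /= [e1 e2].
  by move: h'; rewrite -e1 -e2 => h'; rewrite (Hu _ _ _ _ h h').
by rewrite card_in_imset.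
Qed.

End Gen.

Section Stack.
Variables (n m : nat) (FH E : {set 'I_m * 'I_m * 'I_m}) (i : 'I_m -> 'I_n)
  (p : 'I_m * 'I_m * 'I_m -> 'I_n).

Lemma stk_mem t : t \in stacked FH E i p -> exists a b c, ((a,b,c) \in FH) /\
  (if (a,b,c) \in E then t = (i a, i b, i c) else t \in rots (i a, i b, p (a,b,c))).
Proof.
rewrite inE => /exists_inP [[[a b] c] hs h]; exists a, b, c; split => //.
by move: h; case: ifP => _ // /eqP.
Qed.

Lemma old_endpoint u v : adj (stacked FH E i p) u v -> (u \in codom i) || (v \in codom i).
Proof.
move/existsP=> [z /stk_mem [a [b [c [hs]]]]].
case: ifP => _; first by case=> -> _ _; rewrite codom_f.
rewrite /rots /= !inE -!orbA => /or3P [/eqP[-> _ _]|/eqP[-> _ _]|/eqP[_ -> _]];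
  by rewrite codom_f ?orbT.
Qed.

Lemma deg_G1 w : is_triangulation FH -> (forall v, deg FH v <= 6) ->
  stacking_data FH E i p -> deg (stacked FH E i p) w <= 12.
Proof.
move=> [_ [_ [Hu [Hsym _]]]] Hdeg [inj [sE [rotE [cE [prot [pdist [pnew pall]]]]]]].
rewrite /deg.
case: (pall w) => [[x ->] | [s0 [hs0 hs0E] ->]].
- pose S := [set s in FH | s.1.2 == x].
  pose N := [set b | adj FH x b].
  have sub : [set y | adj (stacked FH E i p) (i x) y] \subset (i @: N) :|: (p @: S).
    apply/subsetP => y; rewrite [y \in [set _ | _]]inE => /existsP [z /stk_mem [a [b [c [hs]]]]].
    case: ifP => hE.
      move=> [/inj ea -> _]; rewrite in_setU; apply/orP; left; apply/imsetP; exists b => //.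
      by rewrite inE; apply/existsP; exists c; rewrite ea.
    rewrite /rots /= !inE -!orbA => /or3P [/eqP[e1 e2 _]|/eqP[e1 e2 _]|/eqP[e1 _ _]].
    + move/inj: e1 => ea; apply/orP; left; apply/imsetP; exists b => //.
      by rewrite inE; apply/existsP; exists c; rewrite ea.
    + move/inj: e1 => eb; apply/orP; right; apply/imsetP; exists (a,b,c) => //.
      by rewrite inE hs /= eb eqxx.
    + have := pnew (a,b,c) x hs; rewrite hE e1 eqxx => /(_ isT) //.
  have cS : #|S| <= #|N|.
    have injS : {in S &, injective (fun s : 'I_m * 'I_m * 'I_m => s.1.1)}.
      move=> [[a b] c] [[a' b'] c']; rewrite !inE /= => /andP[h /eqP eb] /andP[h' /eqP eb'] ea.
      move: h'; rewrite -ea eb' -eb => h'.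
      by rewrite (Hu _ _ _ _ h h').
    rewrite -(card_in_imset injS); apply: subset_leq_card; apply/subsetP => y.
    case/imsetP => [[[a b] c]]; rewrite inE /= => /andP [h /eqP eb] ->.
    have [d hd] := Hsym _ _ _ h.
    by rewrite inE; apply/existsP; exists d; rewrite -eb.
  apply: (leq_trans (subset_leq_card sub)).
  apply: (leq_trans (leq_card_setU _ _)).
  have := leq_imset_card i N; have := leq_imset_card p S; have := Hdeg x.
  rewrite /deg -/N => h1 h2 h3.
  apply: (leq_trans (leq_add h3 h2)).
  apply: (leq_trans (leq_add (leqnn _) cS)).
  exact: (leq_add h1 h1).
- have sub : [set y | adj (stacked FH E i p) (p s0) y] \subset [set i t.1.1 | t in rots s0].
    apply/subsetP => y; rewrite [y \in [set _ | _]]inE => /existsP [z /stk_mem [a [b [c [hs]]]]].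
    case: ifP => hE.
      by move=> [e1 _ _]; have := pnew s0 a hs0 hs0E; rewrite e1 eqxx.
    rewrite /rots /= !inE -!orbA => /or3P [/eqP[e1 e2 _]|/eqP[e1 e2 _]|/eqP[e1 e2 _]].
    + by have := pnew s0 a hs0 hs0E; rewrite e1 eqxx.
    + by have := pnew s0 b hs0 hs0E; rewrite e1 eqxx.
    + have hr := pdist s0 (a,b,c) hs0 hs hs0E (negbT hE) e1.
      by apply/imsetP; exists (a,b,c).
  apply: (leq_trans (subset_leq_card sub)).
  apply: (leq_trans (leq_imset_card _ _)).
  rewrite /rots; set A1 := [set s0; rot3 s0; rot3 (rot3 s0)].
  have : #|A1| <= 3.
    rewrite /A1; apply: (leq_trans (leq_card_setU _ _)).
    rewrite cards1 addn1 ltnS; apply: (leq_trans (leq_card_setU _ _)).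
    by rewrite !cards1.
  by move/leq_trans; apply.
Qed.

End Stack.

Lemma G2adj_sym n (u w : 'I_n) : G2adj u w -> G2adj w u.
Proof.
rewrite /G2adj => /andP [h1 h2]; apply/andP; split; first by rewrite eq_sym.
by move: h2; case/or4P => ->; rewrite ?orbT.
Qed.

Section Main.
Variables (n : nat) (hn : 3 <= n) (G : {set 'I_n * 'I_n * 'I_n}) (s : {perm 'I_n}).
Hypothesis Hs : forall x y, adj G (s x) (s y) = G2adj x y.

Let hA : n - 2 < n. Proof. lia. Qed.
Let hB : n - 1 < n. Proof. lia. Qed.
Definition vA := s (Ordinal hA).
Definition vB := s (Ordinal hB).

Lemma adjG_s x y : adj G x y = G2adj (s^-1 x)%g (s^-1 y)%g.
Proof. by rewrite -Hs !permKV. Qed.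

Lemma symG x y : adj G x y -> adj G y x.
Proof. by rewrite !adjG_s; apply: G2adj_sym. Qed.

Lemma small v : v \notin [set vA; vB] -> (s^-1 v < n - 2)%g%N.
Proof.
move=> hv; rewrite ltnNge; apply/negP => hge.
have := ltn_ord (s^-1 v)%g => hlt.
have : (nat_of_ord (s^-1 v)%g = n - 2) \/ (nat_of_ord (s^-1 v)%g = n - 1) by lia.
case => e.
- have eu : (s^-1 v)%g = Ordinal hA by apply: val_inj.
  by move: hv; rewrite !inE /vA -eu permKV eqxx.
- have eu : (s^-1 v)%g = Ordinal hB by apply: val_inj.
  by move: hv; rewrite !inE /vB -eu permKV eqxx orbT.
Qed.

Lemma nbr v y : v \notin [set vA; vB] -> y \notin [set vA; vB] -> adj G v y ->
  (nat_of_ord (s^-1 y)%g = (s^-1 v)%g.+1) \/ ((nat_of_ord (s^-1 y)%g).+1 = (s^-1 v)%g).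
Proof.
move=> hv hy; rewrite adjG_s /G2adj => /andP [_ h].
have hu := small hv; have hw := small hy.
rewrite leqNgt hu leqNgt hw /= in h.
by case/orP: h => /eqP e; [left|right].
Qed.

End Main.

Lemma rat_part (n q : nat) (h : (3 * q <= n)%N) :
  ((7 * n)%:R / 3 - 34 <= ((3 * n)%:Z - 6 - (2 * q)%:Z - 28)%:~R :> rat)%R.
Proof.
have h3r : ((3 * q)%:R <= n%:R :> rat)%R by rewrite ler_nat.
rewrite !intrD !mulrNz !natrM in h3r *.
rewrite -!pmulrn !natrM. lra.
Qed.

Theorem mainTheorem5 (n : nat) (hn : (3 <= n)%N)
  (FH E : {set 'I_(n %/ 3 + 2) * 'I_(n %/ 3 + 2) * 'I_(n %/ 3 + 2)})
  (i : 'I_(n %/ 3 + 2) -> 'I_n)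
  (p : 'I_(n %/ 3 + 2) * 'I_(n %/ 3 + 2) * 'I_(n %/ 3 + 2) -> 'I_n)
  (G1 : {set 'I_n * 'I_n * 'I_n}) :
  is_triangulation FH ->
  (forall v, (deg FH v <= 6)%N) ->
  stacking_data FH E i p ->
  G1 = stacked FH E i p ->
  is_triangulation G1 ->
  forall (k : nat) (G : {set 'I_n * 'I_n * 'I_n}),
    flip_reach k G1 G -> graph_iso_to G (@G2adj n) ->
    ((3 * n)%:Z - 6 - (2 * (n %/ 3))%:Z - 28 <= k%:Z)%R /\
    ((7 * n)%:R / 3 - 34 <= ((3 * n)%:Z - 6 - (2 * (n %/ 3))%:Z - 28)%:~R :> rat)%R.
Proof.
move=> HFH Hdeg Hst HG1 HtG1 k G Hreach [s Hs].
split; last by apply: rat_part; rewrite mulnC leq_divM.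
have := HtG1; rewrite /is_triangulation => -[_ [_ [Hu1 [Hsym1 [_ [_ hcard]]]]]].
have hP1 : #|P G1| = 6 * (n - 2) by rewrite (card_P Hu1) hcard card_ord.
have hr := reach_card (P G1) Hreach; rewrite setDv cards0 add0n in hr.
have hID := cardsID (P G) (P G1).
suff hC : (#|P G1 :&: P G| <= 4 * (n %/ 3) + 56)%N by lia.
set AB := [set vA hn s; vB hn s].
have symG1 : forall x y, adj G1 x y -> adj G1 y x.
  by move=> x y /existsP [z hz]; have [d hd] := Hsym1 _ _ _ hz; apply/existsP; exists d.
have degG1 : forall w, (#|[set y | adj G1 w y]| <= 12)%N.
  by move=> w; have := deg_G1 w HFH Hdeg Hst; rewrite /deg -HG1.
pose X (v : 'I_n) := (fun y => (v, y)) @: [set y | adj G1 v y].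
pose Y (v : 'I_n) := (fun y => (y, v)) @: [set y | adj G1 v y].
pose Zs := [set xy : 'I_n * 'I_n | [&& xy.1 \in codom i, xy.1 \notin AB,
              adj G xy.1 xy.2 & xy.2 \notin AB]].
pose sw := fun xy : 'I_n * 'I_n => (xy.2, xy.1).
have sub : P G1 :&: P G \subset
    X (vA hn s) :|: (X (vB hn s) :|: (Y (vA hn s) :|: (Y (vB hn s) :|: (Zs :|: sw @: Zs)))).
  apply/subsetP => [[x y]] /setIP [hx hy]; rewrite !inE /= in hx hy.
  rewrite !in_setU.
  case: (boolP (x == vA hn s)) => [/eqP ex|nxA].
    have m : (x,y) \in X (vA hn s) by apply/imsetP; exists y; rewrite ?inE -?ex.
    by rewrite m.
  case: (boolP (x == vB hn s)) => [/eqP ex|nxB].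
    have m : (x,y) \in X (vB hn s) by apply/imsetP; exists y; rewrite ?inE -?ex.
    by rewrite m orbT.
  case: (boolP (y == vA hn s)) => [/eqP ey|nyA].
    have m : (x,y) \in Y (vA hn s).
      by apply/imsetP; exists x; rewrite ?inE -?ey //; exact: symG1.
    by rewrite m !orbT.
  case: (boolP (y == vB hn s)) => [/eqP ey|nyB].
    have m : (x,y) \in Y (vB hn s).
      by apply/imsetP; exists x; rewrite ?inE -?ey //; exact: symG1.
    by rewrite m !orbT.
  have hxAB : x \notin AB by rewrite !inE negb_or nxA nxB.
  have hyAB : y \notin AB by rewrite !inE negb_or nyA nyB.
  move: (hx); rewrite HG1 => /old_endpoint /orP [ho|ho].
    have m : (x,y) \in Zs by rewrite inE /= ho hxAB hy hyAB.
    by rewrite m !orbT.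
  have m : (x,y) \in sw @: Zs.
    by apply/imsetP; exists (y,x) => //; rewrite inE /= ho hyAB hxAB (symG Hs).
  by rewrite m !orbT.
have cZ : (#|Zs| <= 2 * (n %/ 3 + 2))%N.
  pose f := fun xy : 'I_n * 'I_n =>
    (xy.1, (nat_of_ord (s^-1 xy.1)%g < nat_of_ord (s^-1 xy.2)%g)%N).
  have injf : {in Zs &, injective f}.
    move=> [x y] [x' y']; rewrite !inE /= => /and4P [_ hx hxy hy] /and4P [_ hx' hxy' hy'] [ex eb].
    subst x'.
    have hX : x \notin AB by rewrite !inE.
    have hY : y \notin AB by rewrite !inE.
    have hY' : y' \notin AB by rewrite !inE.
    have h1 := nbr Hs hX hY hxy; have h2 := nbr Hs hX hY' hxy'.
    have ew : nat_of_ord (s^-1 y)%g = nat_of_ord (s^-1 y')%g.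
      move: eb.
      case: (ltnP (s^-1 x)%g (s^-1 y)%g) => h3; case: (ltnP (s^-1 x)%g (s^-1 y')%g) => h4 // _;
        move: h1 h2 h3 h4; clear;
        move: (nat_of_ord (s^-1 x)%g) (nat_of_ord (s^-1 y)%g) (nat_of_ord (s^-1 y')%g) => u w w';
        lia.
    have ew' : (s^-1 y)%g = (s^-1 y')%g by apply: val_inj.
    by rewrite -(permKV s y) ew' permKV.
  rewrite -(card_in_imset injf).
  have subf : f @: Zs \subset setX (i @: setT) setT.
    apply/subsetP => _ /imsetP [[x y] hz ->]; rewrite in_setX /= in_setT andbT.
    move: hz; rewrite inE /= => /and4P [ho _ _ _].
    by case/codomP: ho => z ->; rewrite imset_f ?inE.
  apply: (leq_trans (subset_leq_card subf)).
  rewrite cardsX cardsT card_bool mulnC leq_mul2l /=.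
  by have := leq_imset_card i setT; rewrite cardsT card_ord.
have cU : forall (A B : {set 'I_n * 'I_n}) a b, (#|A| <= a)%N -> (#|B| <= b)%N ->
    (#|A :|: B| <= a + b)%N.
  by move=> A B a b ha hb; apply: (leq_trans (leq_card_setU A B)); exact: leq_add.
have cX : forall v, (#|X v| <= 12)%N.
  by move=> v; apply: (leq_trans (leq_imset_card _ _)).
have cY : forall v, (#|Y v| <= 12)%N.
  by move=> v; apply: (leq_trans (leq_imset_card _ _)).
have cS : (#|sw @: Zs| <= 2 * (n %/ 3 + 2))%N.
  exact: (leq_trans (leq_imset_card _ _) cZ).
have := cU _ _ _ _ (cX (vA hn s)) (cU _ _ _ _ (cX (vB hn s)) (cU _ _ _ _ (cY (vA hn s))
          (cU _ _ _ _ (cY (vB hn s)) (cU _ _ _ _ cZ cS)))).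
move/(leq_trans (subset_leq_card sub)).
lia.
Qed.
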